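(* Let $G$ be a finite, simple, connected graph on $n$ vertices, with adjacency entries $a_{uv}$ and degrees $d_u$, and let $0=\lambda_0<\lambda_1\le\dots\le\lambda_{n-1}$ be the eigenvalues of its graph Laplacian. Let $k$ be an integer with $1\le k<n$, and let $\mathfrak{M}_0$ be any set of $n(k-1)$ ordered pairs $(u,v)$ of distinct vertices. Then $$\sum_{j=1}^{k-1}\lambda_j\le \frac{1}{2n}\sum_{(u,v)\in\mathfrak{M}_0}\big(d_u+d_v+2a_{uv}\big).$$
   Context: $a_{uv}=1$ if $u$ and $v$ are adjacent and $0$ otherwise; the graph Laplacian is $H=\mathrm{Deg}-A$ with $\mathrm{Deg}$ the diagonal degree matrix; its eigenvalues are listed with multiplicity in nondecreasing order, indexed from $0$. *)

(* Defs.v *)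
From HB Require Import structures.
From mathcomp Require Import all_boot all_order all_algebra.
Set Implicit Arguments. Unset Strict Implicit. Unset Printing Implicit Defensive.
Import Order.TTheory GRing.Theory Num.Theory.
Local Open Scope ring_scope.

Definition simple_graph (n : nat) (e : rel 'I_n) : Prop :=
  symmetric e /\ irreflexive e.

Definition connected_graph (n : nat) (e : rel 'I_n) : Prop :=
  forall u v : 'I_n, connect e u v.

Definition deg (n : nat) (e : rel 'I_n) (u : 'I_n) : nat := #|[set v | e u v]|.

Definition adj (n : nat) (e : rel 'I_n) (u v : 'I_n) : nat := nat_of_bool (e u v).

Definition adjmx (R : pzRingType) (n : nat) (e : rel 'I_n) : 'M[R]_n :=
  \matrix_(u, v) (adj e u v)%:R.

Definition degmx (R : pzRingType) (n : nat) (e : rel 'I_n) : 'M[R]_n :=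
  \matrix_(u, v) (if u == v then (deg e u)%:R else 0).

Definition laplacian (R : pzRingType) (n : nat) (e : rel 'I_n) : 'M[R]_n :=
  degmx R e - adjmx R e.

(* s is the list of eigenvalues of A, with multiplicity, in nondecreasing
   order (indexed from 0): s is sorted and the characteristic polynomial
   of A factors as prod_(x in s) (X - x). *)
Definition sorted_eigenvalues (R : numDomainType) (n : nat) (A : 'M[R]_n)
    (s : seq R) : Prop :=
  sorted <=%R s /\ char_poly A = \prod_(x <- s) ('X - x%:P).

(* Main.v *)
Require Import Defs.
From HB Require Import structures.
From mathcomp Require Import all_boot all_order all_algebra.
From mathcomp Require Import ring lra.
From mathcomp Require Import complex.
Import Order.TTheory GRing.Theory Num.Theory.
Local Open Scope ring_scope.
Section Spec.
Local Open Scope sesquilinear_scope.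

Lemma char_poly_conj (F : fieldType) m (B U : 'M[F]_m) : U \in unitmx ->
  char_poly (invmx U *m B *m U) = char_poly B.
Proof.
move=> Uu; rewrite /char_poly /char_poly_mx !map_mxM.
set f := map_mx (@polyC F).
have fUU : f (invmx U) *m f U = 1%:M by rewrite -map_mxM mulVmx // map_mx1.
have -> : 'X%:M - f (invmx U) *m f B *m f U = f (invmx U) *m ('X%:M - f B) *m f U.
  rewrite mulmxBr mulmxBl; congr (_ - _).
  by rewrite scalar_mxC -mulmxA fUU mulmx1.
by rewrite !det_mulmx mulrAC -det_mulmx fUU det1 mul1r.
Qed.

Section Gen.
Variable (C : numClosedFieldType) (n : nat) (e : rel 'I_n).
Hypothesis esymm : symmetric e.
Hypothesis eirr : irreflexive e.

Local Notation H := (laplacian C e).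

Lemma lapE u v : H u v = (if u == v then (deg e u)%:R else 0) - (adj e u v)%:R.
Proof. by rewrite /laplacian !mxE. Qed.

Lemma adjC u v : adj e u v = adj e v u.
Proof. by rewrite /adj esymm. Qed.

Lemma lap_sym u v : H u v = H v u.
Proof. by rewrite !lapE adjC eq_sym; case: eqP => // ->. Qed.

Lemma lap_conj u v : (H u v)^* = H u v.
Proof. rewrite lapE; case: eqP => _; rewrite ?sub0r ?rmorphN ?rmorphB /= ?conjC_nat //. Qed.

Lemma tc_entry m (M : 'M[C]_m) u v : (M^t*) u v = (M v u)^*.
Proof. by rewrite !mxE. Qed.

Lemma lap_herm : H \is hermsymmx.
Proof.
apply/is_hermitianmxP; rewrite expr0 scale1r; apply/matrixP => u v.
by rewrite tc_entry lap_conj lap_sym.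
Qed.

Lemma rowv_norm m (y : 'rV[C]_m) : (y *m y^t*) 0 0 = \sum_j `|y 0 j| ^+ 2.
Proof. by rewrite mxE; apply: eq_bigr => j _; rewrite !mxE normCK. Qed.

Lemma deg_sum u : (deg e u)%:R = \sum_v (adj e u v)%:R :> C.
Proof.
rewrite /deg /adj -natr_sum; congr (_%:R).
rewrite -sum1_card big_mkcond /=; apply: eq_bigr => v _.
by rewrite inE; case: (e u v).
Qed.

Lemma qf_double (x : 'rV[C]_n) (M : 'M[C]_n) :
  (x *m M *m x^t*) 0 0 = \sum_u \sum_v x 0 u * M u v * (x 0 v)^*.
Proof.
rewrite mxE (eq_bigr (fun v => \sum_u x 0 u * M u v * (x 0 v)^*)).
  by rewrite exchange_big.
by move=> v _; rewrite !mxE big_distrl.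
Qed.

Lemma qf_S (x : 'rV[C]_n) :
  (x *m H *m x^t*) 0 0 =
  \sum_u \sum_v (adj e u v)%:R * (x 0 u * (x 0 u)^* - x 0 u * (x 0 v)^*).
Proof.
rewrite qf_double; apply: eq_bigr => u _.
rewrite (eq_bigr (fun v => x 0 u * (if u == v then (deg e u)%:R else 0) * (x 0 v)^*
   - (adj e u v)%:R * (x 0 u * (x 0 v)^*))); last first.
  by move=> v _; rewrite lapE mulrBr mulrBl; congr (_ - _); rewrite mulrCA mulrA.
rewrite sumrB (bigD1 u) //= eqxx big1 ?addr0; last first.
  by move=> v /negbTE; rewrite eq_sym => ->; rewrite mulr0 mul0r.
rewrite [in RHS](eq_bigr (fun v => (adj e u v)%:R * (x 0 u * (x 0 u)^*) - (adj e u v)%:R * (x 0 u * (x 0 v)^*))); last by move=> v _; rewrite mulrBr.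
rewrite sumrB -mulr_suml -deg_sum; congr (_ - _).
by rewrite mulrAC mulrC.
Qed.

Lemma qf_lap (x : 'rV[C]_n) :
  (x *m H *m x^t*) 0 0 =
  2^-1 * \sum_u \sum_v (adj e u v)%:R * `|x 0 u - x 0 v| ^+ 2.
Proof.
set S := \sum_u \sum_v _.
have -> : S = (x *m H *m x^t*) 0 0 + (x *m H *m x^t*) 0 0.
  rewrite !qf_S [X in _ + X]exchange_big -big_split /=.
  apply: eq_bigr => u _; rewrite -big_split /=; apply: eq_bigr => v _.
  rewrite adjC -mulrDr normCK rmorphB /= adjC; congr (_ * _); ring.
set q := (x *m _ *m _) 0 0; by field.
Qed.

Lemma sum_del (g : 'I_n -> C) u : \sum_b g b * (b == u)%:R = g u.
Proof.
rewrite (bigD1 u) //= eqxx mulr1 big1 ?addr0 // => b /negbTE ->.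
by rewrite mulr0.
Qed.

Definition dvec (u v : 'I_n) : 'rV[C]_n := delta_mx 0 u - delta_mx 0 v.

Lemma dvecE u v b : dvec u v 0 b = (b == u)%:R - (b == v)%:R.
Proof. by rewrite !mxE eqxx. Qed.

Lemma qf_edge u v : u != v ->
  (dvec u v *m H *m (dvec u v)^t*) 0 0 =
  ((deg e u + deg e v + 2 * adj e u v)%N)%:R.
Proof.
move=> uv; rewrite qf_double.
rewrite (eq_bigr (fun a => dvec u v 0 a * (H a u - H a v))); last first.
  move=> a _; under eq_bigr do rewrite -mulrA.
  rewrite -mulr_sumr; congr (_ * _).
  rewrite -(sum_del (H a) u) -(sum_del (H a) v) -sumrB; apply: eq_bigr => b _.
  by rewrite dvecE rmorphB /= !conjC_nat mulrBr.
rewrite (eq_bigr (fun a => (H a u - H a v) * (a == u)%:R - (H a u - H a v) * (a == v)%:R)); last first.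
  by move=> a _; rewrite dvecE mulrC mulrBr.
rewrite sumrB !sum_del !lapE eqxx (negbTE uv) eq_sym (negbTE uv) eqxx.
rewrite /adj !eirr esymm /= 2!natrD natrM; ring.
Qed.

Local Notation P := (spectralmx H).
Local Notation D := (spectral_diag H).

Lemma PPt : P *m P^t* = 1%:M.
Proof. exact/unitarymxP/spectral_unitarymx. Qed.

Lemma PtP : P^t* *m P = 1%:M.
Proof. by rewrite -invmx_unitary ?spectral_unitarymx // mulVmx ?spectral_unit. Qed.

Lemma HP : H = P^t* *m diag_mx D *m P.
Proof.
have /orthomx_spectralP E : H \is normalmx by apply: hermitian_normalmx; exact: lap_herm.
by rewrite {1}E invmx_unitary ?spectral_unitarymx.
Qed.

Lemma tcM m p q (A : 'M[C]_(m, p)) (B : 'M[C]_(p, q)) : (A *m B)^t* = B^t* *m A^t*.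
Proof. by rewrite trmx_mul map_mxM. Qed.

Lemma qf_spec (x : 'rV[C]_n) :
  (x *m H *m x^t*) 0 0 = \sum_i D 0 i * `|(x *m P^t*) 0 i| ^+ 2.
Proof.
have := HP; set Q := spectralmx _; set d := spectral_diag _ => ->.
rewrite !mulmxA -[_ *m Q *m _]mulmxA -[Q as X in X *m x^t*]trmxCK -tcM.
rewrite -/(spectralmx H) -/(spectral_diag H).
set y := x *m P^t*.
rewrite mxE; apply: eq_bigr => i _.
by rewrite mul_mx_diag !mxE normCK mulrCA mulrA.
Qed.

Lemma norm_spec (x : 'rV[C]_n) :
  \sum_i `|(x *m P^t*) 0 i| ^+ 2 = \sum_u `|x 0 u| ^+ 2.
Proof.
by rewrite -!rowv_norm tcM trmxCK mulmxA -[x *m _ *m P]mulmxA PtP mulmx1.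
Qed.

Lemma row_norm i : \sum_u `|P i u| ^+ 2 = 1.
Proof.
have := congr1 (fun M : 'M[C]_n => M i i) PPt; rewrite /= !mxE eqxx /= mulr1n => <-.
by apply: eq_bigr => u _; rewrite !mxE normCK.
Qed.

Lemma eig_row i : (row i P *m H *m (row i P)^t*) 0 0 = D 0 i.
Proof.
have E : row i P *m H = D 0 i *: row i P.
  have := HP; set Q := spectralmx _; set d := spectral_diag _ => E.
  rewrite -row_mul [in X in Q *m X]E !mulmxA PPt mul1mx mul_diag_mx.
  by apply/rowP => j; rewrite !mxE.
rewrite E -scalemxAl mxE rowv_norm.
rewrite (eq_bigr (fun u => `|P i u| ^+ 2)) ?row_norm ?mulr1 // => u _.
by rewrite mxE.
Qed.

Lemma dvecP u v i : (dvec u v *m P^t*) 0 i = (P i u)^* - (P i v)^*.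
Proof.
rewrite mxE; under eq_bigr do rewrite dvecE mulrBl.
rewrite sumrB; congr (_ - _).
  by rewrite -[RHS](sum_del (fun a => (P i a)^*) u); apply: eq_bigr => a _; rewrite tc_entry mulrC.
by rewrite -[RHS](sum_del (fun a => (P i a)^*) v); apply: eq_bigr => a _; rewrite tc_entry mulrC.
Qed.

Lemma dnorm u v : u != v -> \sum_a `|dvec u v 0 a| ^+ 2 = 2.
Proof.
move=> uv.
under eq_bigr do rewrite normCK dvecE rmorphB /= !conjC_nat mulrBr.
rewrite sumrB !sum_del eqxx (negbTE uv) eq_sym (negbTE uv) /=.
by rewrite eqxx subr0 sub0r opprK.
Qed.

Lemma sq_ident (q : 'I_n -> C) :
  \sum_u \sum_v `|q u - q v| ^+ 2 =
  (2 * n)%:R * \sum_u `|q u| ^+ 2 - 2 * `|\sum_u q u| ^+ 2.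
Proof.
have E : forall u v, `|q u - q v| ^+ 2 =
   (`|q u| ^+ 2 + `|q v| ^+ 2) - (q u * (q v)^* + q v * (q u)^*).
  by move=> u v; rewrite !normCK rmorphB /=; ring.
under eq_bigr do under eq_bigr do rewrite E.
under eq_bigr do rewrite sumrB big_split /=.
rewrite sumrB !big_split /= [X in _ + X - _]exchange_big /=.
under eq_bigr do rewrite sumr_const card_ord.
have -> : \sum_u \sum_v (q u * (q v)^* + q v * (q u)^*) =
     2 * `|\sum_u q u| ^+ 2.
  rewrite (eq_bigr (fun u => \sum_v q u * (q v)^* + \sum_v q v * (q u)^*)); last first.
    by move=> u _; rewrite big_split.
  rewrite big_split /= [X in _ + X]exchange_big /=.
  have -> : \sum_u \sum_v q u * (q v)^* = `|\sum_u q u| ^+ 2.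
    rewrite normCK rmorph_sum big_distrl /=; apply: eq_bigr => u _.
    by rewrite mulr_sumr.
  by rewrite [RHS]mulr_natl mulr2n.
rewrite !sumrMnl; set S := \sum_i _.
rewrite -[S *+ n]mulr_natr natrM; ring.
Qed.

Definition wt (M0 : {set 'I_n * 'I_n}) i :=
  \sum_(p in M0) `|(dvec p.1 p.2 *m P^t*) 0 i| ^+ 2.

Lemma sq_ge0 (z : C) : 0 <= `|z| ^+ 2.
Proof. by rewrite exprn_ge0. Qed.

Lemma wt_ge0 (M0 : {set 'I_n * 'I_n}) i : 0 <= wt M0 i.
Proof. by apply: sumr_ge0 => p _; exact: sq_ge0. Qed.

Lemma wt_le (M0 : {set 'I_n * 'I_n}) i : wt M0 i <= (2 * n)%:R.
Proof.
rewrite /wt; apply: (@le_trans _ _ (\sum_p `|(dvec p.1 p.2 *m P^t*) 0 i| ^+ 2)).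
  rewrite [X in _ <= X](bigID (fun p => p \in M0)) /= lerDl.
  by apply: sumr_ge0 => p _; exact: sq_ge0.
rewrite -(pair_bigA _ (fun u v => `|(dvec u v *m P^t*) 0 i| ^+ 2)) /=.
under eq_bigr do under eq_bigr do rewrite dvecP.
rewrite sq_ident.
have -> : \sum_u `|(P i u)^*| ^+ 2 = 1.
  by rewrite -(row_norm i); apply: eq_bigr => u _; rewrite norm_conjC.
by rewrite mulr1 gerBl mulr_ge0 // sq_ge0.
Qed.

Lemma wt_sum (M0 : {set 'I_n * 'I_n}) : (forall p, p \in M0 -> p.1 != p.2) ->
  \sum_i wt M0 i = (2 * #|M0|)%:R.
Proof.
move=> hM; rewrite /wt exchange_big /=.
rewrite (eq_bigr (fun _ => 2)); last by move=> p /hM pp; rewrite norm_spec dnorm.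
by rewrite sumr_const natrM mulr_natr.
Qed.

Lemma qf_sum (M0 : {set 'I_n * 'I_n}) : (forall p, p \in M0 -> p.1 != p.2) ->
  \sum_(p in M0) ((deg e p.1 + deg e p.2 + 2 * adj e p.1 p.2)%N)%:R
  = \sum_i D 0 i * wt M0 i.
Proof.
move=> hM; rewrite (eq_bigr (fun p => (dvec p.1 p.2 *m H *m (dvec p.1 p.2)^t*) 0 0)); last first.
  by move=> p /hM pp; rewrite qf_edge.
under eq_bigr do rewrite qf_spec.
by rewrite exchange_big /=; apply: eq_bigr => i _; rewrite /wt mulr_sumr.
Qed.

Lemma Dmin_le0 i0 : (0 < n)%N -> (forall i, D 0 i0 <= D 0 i) -> D 0 i0 <= 0.
Proof.
move=> n0 hmin.
pose x : 'rV[C]_n := const_mx 1.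
have q0 : (x *m H *m x^t*) 0 0 = 0.
  rewrite qf_lap big1 ?mulr0 // => u _; rewrite big1 // => v _.
  by rewrite !mxE subrr normr0 expr0n mulr0.
have nx : \sum_i `|(x *m P^t*) 0 i| ^+ 2 = n%:R.
  rewrite norm_spec (eq_bigr (fun _ => 1)) ?sumr_const ?card_ord //.
  by move=> u _; rewrite mxE normr1 expr1n.
have : D 0 i0 * n%:R <= 0.
  rewrite -q0 qf_spec -nx mulr_sumr; apply: ler_sum => i _.
  by rewrite mulrC [X in _ <= X]mulrC ler_wpM2l // sq_ge0.
by rewrite pmulr_lle0 // ltr0n.
Qed.

Lemma const_row i0 : (forall u v, connect e u v) -> D 0 i0 <= 0 ->
  forall u v, P i0 u = P i0 v.
Proof.
move=> conn hD.
pose p := row i0 P.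
have h : 2^-1 * \sum_u \sum_v (adj e u v)%:R * `|p 0 u - p 0 v| ^+ 2 <= 0.
  by rewrite -qf_lap eig_row.
have ge : forall u v, 0 <= (adj e u v)%:R * `|p 0 u - p 0 v| ^+ 2.
  by move=> u v; rewrite mulr_ge0 ?sq_ge0.
have S0 : \sum_u \sum_v (adj e u v)%:R * `|p 0 u - p 0 v| ^+ 2 = 0.
  apply/le_anti/andP; split; last by apply: sumr_ge0 => u _; apply: sumr_ge0.
  by move: h; rewrite pmulr_rle0 // invr_gt0 ltr0n.
have edge : forall u v, e u v -> P i0 u = P i0 v.
  move=> u v euv.
  have := psumr_eq0P (fun u _ => sumr_ge0 _ (fun v _ => ge u v)) S0 (erefl true : true).
  move=> /(_ u) S1.
  have := psumr_eq0P (fun v _ => ge u v) S1 (erefl true : true) => /(_ v).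
  rewrite /adj euv mul1r !mxE => /eqP; rewrite sqrf_eq0 normr_eq0 subr_eq0 => /eqP.
  done.
move=> u v.
have cl : closed e [pred w | P i0 w == P i0 u].
  by move=> a b /edge; rewrite !inE => ->.
have := closed_connect cl (conn u v); rewrite !inE eqxx => /esym/eqP.
by move=> ->.
Qed.

Lemma wt_zero (M0 : {set 'I_n * 'I_n}) i0 :
  (forall u v, P i0 u = P i0 v) -> wt M0 i0 = 0.
Proof.
move=> hc; rewrite /wt big1 // => p _.
by rewrite dvecP (hc p.1 p.2) subrr normr0 expr0n.
Qed.

Lemma char_lap : char_poly H = \prod_(i < n) ('X - (D 0 i)%:P).
Proof.
have := HP; set Q := spectralmx _; set d := spectral_diag _ => E.
rewrite E -invmx_unitary ?spectral_unitarymx // char_poly_conj ?spectral_unit //.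
by rewrite char_poly_trig ?diag_mx_is_trig //; apply: eq_bigr => i _; rewrite mxE eqxx.
Qed.

End Gen.

End Spec.

Lemma comb (R : realFieldType) n (s : seq R) (r w : 'I_n -> R) (k : nat) (c : R) (i0 : 'I_n) :
  sorted <=%R s -> perm_eq s [seq r i | i <- enum 'I_n] -> (1 <= k < n)%N ->
  (forall i, r i0 <= r i) -> (forall i, 0 <= w i <= c) ->
  \sum_i w i = c * (k.-1)%:R -> w i0 = 0 ->
  c * \sum_(1 <= j < k) s`_j <= \sum_i r i * w i.
Proof.
move=> hs hp /andP[k1 kn] hmin hw hsum hw0.
have ssz : size s = n by rewrite (perm_size hp) size_map size_enum_ord.
have srt : forall i j, (i <= j)%N -> (j < n)%N -> s`_i <= s`_j.
  move=> i j ij jn; apply: (sorted_leq_nth le_trans lexx 0 hs); rewrite ?inE ?ssz //.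
  exact: leq_ltn_trans ij jn.
set t := s`_k.-1.
pose f x := if x <= t then x - t else 0.
have E1 : \sum_(1 <= j < k) s`_j = (k.-1)%:R * t + \sum_(1 <= j < n) f s`_j.
  rewrite (big_cat_nat (n:=k) (m:=1) (p:=n)) //=; last exact: ltnW.
  rewrite [X in _ + (_ + X)]big1_seq ?addr0; last first.
    move=> j /andP[_]; rewrite mem_index_iota => /andP[kj jn]; rewrite /f.
    have := srt k.-1 j (leq_trans (leq_pred k) kj) jn.
    case: ifP => // h1 h2; apply/eqP; rewrite subr_eq0; apply/eqP/le_anti.
    by rewrite h1 h2.
  rewrite [in RHS](eq_big_nat _ _ (F2 := fun j => s`_j - t)); last first.
    move=> j /andP[j1 jk]; rewrite /f (srt j k.-1) //.
      by rewrite -ltnS prednK.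
    exact: leq_ltn_trans (leq_pred k) kn.
  rewrite [X in _ + X](_ : _ = \sum_(1 <= j < k) s`_j - \sum_(1 <= j < k) t); last by rewrite -sumrB.
  rewrite sumr_const_nat subn1 -mulr_natl; ring.
have s0 : s`_0 = r i0.
  case: s hs hp ssz srt {E1 t f} => [|a s'] hs hp ssz srt /=; first by move: ssz (ltn_ord i0); move: (val i0) => m /= <-.
  apply/le_anti/andP; split.
    have : r i0 \in a :: s' by rewrite (perm_mem hp) map_f ?mem_enum.
    rewrite inE => /orP[/eqP -> //|].
    by move/(allP (order_path_min le_trans hs)).
  have : a \in [seq r i | i <- enum 'I_n] by rewrite -(perm_mem hp) mem_head.
  by case/mapP => j _ ->.
have E2 : \sum_(1 <= j < n) f s`_j = \sum_i f (r i) - f (r i0).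
  have : \sum_(x <- s) f x = \sum_i f (r i).
    by rewrite (perm_big _ hp) big_map big_enum.
  rewrite (big_nth 0) ssz big_ltn; last exact: leq_ltn_trans (leq0n k) kn.
  move=> <-.
  have -> : f s`_0 = f (r i0) by rewrite -s0.
  by rewrite addrAC subrr add0r.
rewrite E1 E2.
have -> : \sum_i r i * w i = \sum_i (r i - t) * w i + c * (k.-1)%:R * t.
  rewrite -hsum mulr_suml -big_split /=; apply: eq_bigr => i _; ring.
rewrite [X in _ <= X + _](bigD1 i0) //= hw0 mulr0 add0r.
rewrite (bigD1 i0) //=.
suff : c * \sum_(i | i != i0) f (r i) <= \sum_(i | i != i0) (r i - t) * w i.
  move=> h; lra.
rewrite mulr_sumr; apply: ler_sum => i _; rewrite /f.
have /andP[w0 wc] := hw i.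
case: ifP => h.
  have : r i - t <= 0 by rewrite subr_le0.
  move=> h'; nra.
have : 0 < r i - t by rewrite subr_gt0 ltNge h.
move=> h'; nra.
Qed.

Theorem mainTheorem5 (R : rcfType) (n : nat) (e : rel 'I_n)
    (s : seq R) (k : nat) (M0 : {set 'I_n * 'I_n}) :
  simple_graph e ->
  connected_graph e ->
  sorted_eigenvalues (laplacian R e) s ->
  (1 <= k < n)%N ->
  #|M0| = (n * (k - 1))%N ->
  (forall p, p \in M0 -> p.1 != p.2) ->
  \sum_(1 <= j < k) s`_j <=
    (2 * n)%:R^-1 *
      \sum_(p in M0) ((deg e p.1 + deg e p.2 + 2 * adj e p.1 p.2)%N)%:R.
Proof.
move=> [esymm eirr] conn [hs hchar] hk hM0 hM.
have n0 : (0 < n)%N by case/andP: hk => k1 kn; exact: leq_ltn_trans (leq0n k) kn.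
pose C := (R[i])%type.
pose H := laplacian C e.
pose D := spectral_diag H.
have Dreal : forall i, ((complex.Re (D 0 i))%:C)%C = D 0 i.
  move=> i; apply: RRe_real.
  by have /mxOverP := hermitian_spectral_diag_real (@lap_herm C n e esymm); apply.
pose r i := complex.Re (D 0 i).
pose wR i := complex.Re (wt C n e M0 i).
have wRE : forall i, ((wR i)%:C)%C = wt C n e M0 i.
  by move=> i; apply: RRe_real; apply: ger0_real; exact: wt_ge0.
case: (@arg_minP _ _ _ (Ordinal n0) xpredT r isT) => i0 _ hmin.
have hminC : forall i, D 0 i0 <= D 0 i.
  by move=> i; rewrite -(Dreal i0) -(Dreal i) lecR; exact: hmin.
have hc := @const_row C n e esymm i0 conn (@Dmin_le0 C n e esymm i0 n0 hminC).
have w0 : wR i0 = 0.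
  by apply: complexI; rewrite wRE (@wt_zero C n e M0 i0 hc).
have wb : forall i, 0 <= wR i <= (2 * n)%:R.
  move=> i; apply/andP; split; rewrite -lecR wRE ?rmorph0 ?rmorph_nat.
    exact: wt_ge0.
  exact: wt_le.
have wsum : \sum_i wR i = (2 * n)%:R * (k.-1)%:R.
  apply: complexI; rewrite rmorph_sum /=.
  under eq_bigr do rewrite wRE.
  rewrite (@wt_sum C n e M0 hM) hM0 rmorphM /= !rmorph_nat -natrM mulnA subn1.
  done.
have LC : map_mx (real_complex R) (laplacian R e) = H.
  apply/matrixP => u v; rewrite !mxE rmorphB /= !rmorph_nat.
  by case: eqP => _; rewrite ?rmorph_nat ?rmorph0.
have hperm : perm_eq s [seq r i | i <- enum 'I_n].
  apply: (@perm_map_inj R (complex R) _ (@complexI R)).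
  apply: prod_XsubC_eq.
  rewrite big_map -map_comp big_map big_enum /=.
  have -> : \prod_(x <- s) ('X - ((x%:C)%C)%:P) =
            map_poly (real_complex R) (\prod_(x <- s) ('X - x%:P)).
    by rewrite rmorph_prod /=; apply: eq_bigr => x _; rewrite map_polyXsubC.
  rewrite -hchar map_char_poly LC (@char_lap C n e esymm).
  by apply: eq_bigr => i _; rewrite /r Dreal.
have key : \sum_(p in M0) ((deg e p.1 + deg e p.2 + 2 * adj e p.1 p.2)%N)%:R
           = \sum_i r i * wR i :> R.
  apply: complexI; rewrite !rmorph_sum /=.
  under eq_bigr do rewrite rmorph_nat.
  rewrite (@qf_sum C n e esymm eirr M0 hM); apply: eq_bigr => i _.
  by rewrite rmorphM /= wRE /r Dreal.
rewrite key ler_pdivlMl ?ltr0n ?muln_gt0 ?n0 //.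
exact: (@comb _ _ _ _ _ _ _ _ hs hperm hk (fun j => hmin j isT) wb wsum w0).
Qed.
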